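(* Let $L$ be a bounded distributive lattice and $m\colon 2^{[n]}\to L$ an $L$-valued capacity. Then the Sugeno integral $\mathsf{Su}_m$ is inf-homogeneous and g-comonotone supremal, and it is also sup-homogeneous and g-comonotone infimal.
   Context: $[n]=\{1,\dots,n\}$; $0,1$ are bottom and top of $L$. An $L$-valued capacity is $m\colon 2^{[n]}\to L$, monotone w.r.t. inclusion, with $m(\emptyset)=0$, $m([n])=1$. $\mathsf{Su}_m(\mathbf x)=\bigvee_{I\subseteq[n]}\big(m(I)\wedge\bigwedge_{i\in I}x_i\big)=\bigwedge_{I\subseteq[n]}\big(m([n]\setminus I)\vee\bigvee_{i\in I}x_i\big)$ (empty meet $=1$, empty join $=0$). For $c\in L$, $\mathbf c=(c,\dots,c)$; operations on vectors are componentwise. $f\colon L^n\to L$ is inf-homogeneous if $f(\mathbf c\wedge\mathbf x)=c\wedge f(\mathbf x)$ and sup-homogeneous if $f(\mathbf c\vee\mathbf x)=c\vee f(\mathbf x)$, for all $\mathbf x\in L^n$, $c\in L$. $\mathbf x,\mathbf y$ are g-comonotone if for all $i,j$: $(x_i\vee y_i)\wedge(x_j\vee y_j)=(x_i\wedge x_j)\vee(y_i\wedge y_j)$. $f$ is g-comonotone supremal (resp. infimal) if $f(\mathbf x\vee\mathbf y)=f(\mathbf x)\vee f(\mathbf y)$ (resp. $f(\mathbf x\wedge\mathbf y)=f(\mathbf x)\wedge f(\mathbf y)$) for all g-comonotone $\mathbf x,\mathbf y$. *)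

(* Defs.v *)
From mathcomp Require Import all_boot all_order.
Set Implicit Arguments. Unset Strict Implicit. Unset Printing Implicit Defensive.
Import Order.TTheory.
Local Open Scope order_scope.

Section Sugeno.
Context {disp : Order.disp_t} {L : tbDistrLatticeType disp} {n : nat}.

Definition capacity (m : {set 'I_n} -> L) : Prop :=
  (forall A B : {set 'I_n}, A \subset B -> m A <= m B) /\
  m set0 = \bot /\ m setT = \top.

Definition sugeno (m : {set 'I_n} -> L) (x : 'I_n -> L) : L :=
  \join_(I : {set 'I_n}) (m I `&` \meet_(i in I) x i).

Definition cvec (c : L) : 'I_n -> L := fun _ => c.
Definition vmeet (x y : 'I_n -> L) : 'I_n -> L := fun i => x i `&` y i.
Definition vjoin (x y : 'I_n -> L) : 'I_n -> L := fun i => x i `|` y i.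

Definition inf_homogeneous (f : ('I_n -> L) -> L) : Prop :=
  forall (x : 'I_n -> L) (c : L), f (vmeet (cvec c) x) = c `&` f x.
Definition sup_homogeneous (f : ('I_n -> L) -> L) : Prop :=
  forall (x : 'I_n -> L) (c : L), f (vjoin (cvec c) x) = c `|` f x.

Definition g_comonotone (x y : 'I_n -> L) : Prop :=
  forall i j : 'I_n,
    (x i `|` y i) `&` (x j `|` y j) = (x i `&` x j) `|` (y i `&` y j).

Definition g_comonotone_supremal (f : ('I_n -> L) -> L) : Prop :=
  forall x y : 'I_n -> L, g_comonotone x y -> f (vjoin x y) = f x `|` f y.
Definition g_comonotone_infimal (f : ('I_n -> L) -> L) : Prop :=
  forall x y : 'I_n -> L, g_comonotone x y -> f (vmeet x y) = f x `&` f y.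

End Sugeno.

(* Main.v *)
Require Import Defs.
From mathcomp Require Import all_boot all_order.
Set Implicit Arguments. Unset Strict Implicit. Unset Printing Implicit Defensive.
Import Order.TTheory.
Local Open Scope order_scope.

Section Aux.
Context {disp : Order.disp_t} {L : tbDistrLatticeType disp}.

Lemma joinx_meets (T : Type) (r : seq T) (P : pred T) (F : T -> L) (a : L) :
  a `|` \meet_(i <- r | P i) F i = \meet_(i <- r | P i) (a `|` F i).
Proof. elim/big_rec2: _ => [|i y1 y2 _ <-]; [exact: joinx1 | exact: joinIr]. Qed.

Lemma meets_joinx (T : Type) (r : seq T) (P : pred T) (F : T -> L) (a : L) :
  \meet_(i <- r | P i) F i `|` a = \meet_(i <- r | P i) (F i `|` a).
Proof. rewrite joinC joinx_meets; apply: eq_bigr => i _; exact: joinC. Qed.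

Lemma meetx_joins (T : Type) (r : seq T) (P : pred T) (F : T -> L) (a : L) :
  a `&` \join_(i <- r | P i) F i = \join_(i <- r | P i) (a `&` F i).
Proof. elim/big_rec2: _ => [|i y1 y2 _ <-]; [exact: meetx0 | exact: meetUr]. Qed.

Lemma splitle (t a b : L) : t <= a `|` b -> t <= (t `&` a) `|` (t `&` b).
Proof. by move=> h; rewrite -meetUr lexI le_refl h. Qed.

End Aux.

Ltac mt := match goal with
  | |- is_true (_ <= _ `&` _) => rewrite lexI; apply/andP; split; mt
  | _ => first [ exact: le_refl
               | apply: le_trans (leIl _ _) _; mt
               | apply: le_trans (leIr _ _) _; mt ] end.

Theorem lemma3 (disp : Order.disp_t) (L : tbDistrLatticeType disp) (n : nat)
    (m : {set 'I_n} -> L) :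
  capacity m ->
  (inf_homogeneous (sugeno m) /\ g_comonotone_supremal (sugeno m)) /\
  (sup_homogeneous (sugeno m) /\ g_comonotone_infimal (sugeno m)).
Proof.
move=> [mono [m0 m1]].
have Smono : forall x y : 'I_n -> L, (forall i, x i <= y i) -> sugeno m x <= sugeno m y.
  move=> x y h; apply/joinsP => I _.
  apply: (joins_min (j := I)) => //; rewrite leI2 //.
  by apply/meetsP => i Ii; apply: (meets_max (j := i)).
have Hc : forall x y : 'I_n -> L, g_comonotone x y ->
    forall i j, x i `&` y j <= x j `|` y i.
  move=> x y g i j.
  apply: (@le_trans _ _ ((x i `|` y i) `&` (x j `|` y j))).
    by rewrite leI2 // ?leUl ?leUr.
  by rewrite g leU2 // ?leIr ?leIl.
split; split.
- move=> x c; apply: le_anti; apply/andP; split.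
  + apply/joinsP => I _; rewrite lexI; apply/andP; split.
    * have [->|[j Ij]] := set_0Vmem I; first by rewrite m0 meet0x le0x.
      apply: le_trans (leIr _ _) _; apply: (meets_max (j := j)) => //; by rewrite /vmeet /cvec leIl.
    * apply: (joins_min (j := I)) => //; rewrite leI2 //.
      by apply/meetsP => i Ii; apply: (meets_max (j := i)) => //; rewrite /vmeet leIr.
  + rewrite meetx_joins; apply/joinsP => I _.
    apply: (joins_min (j := I)) => //.
    rewrite meetCA leI2 //; apply/meetsP => i Ii; rewrite /vmeet /cvec leI2 //.
    exact: meets_inf.
- move=> x y g; apply: le_anti; apply/andP; split; last first.
    by rewrite leUx !Smono // => i; rewrite /vjoin ?leUl ?leUr.
  apply/joinsP => I _.
  have G : forall r : seq 'I_n, \meet_(i <- r) (x i `|` y i) <=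
      \meet_(i <- r) x i `|` \meet_(i <- r) y i.
    elim=> [|k r IH]; first by rewrite !big_nil leUl.
    rewrite !big_cons.
    set X := \meet_(i <- r) x i; set Y := \meet_(i <- r) y i.
    apply: (@le_trans _ _ ((x k `|` y k) `&` (X `|` Y))); first by rewrite leI2.
    have A : y k `&` X <= x k `|` Y.
      rewrite /Y joinx_meets; apply/meetsP_seq => i ir _.
      apply: le_trans (Hc _ _ g i k); rewrite meetC leI2 //.
      exact: meets_inf_seq.
    have B : x k `&` Y <= y k `|` X.
      rewrite /X joinx_meets; apply/meetsP_seq => i ir _.
      apply: le_trans _; last by rewrite joinC; apply: (Hc _ _ g k i).
      rewrite leI2 //; exact: meets_inf_seq.
    rewrite meetUl !meetUr leUx; apply/andP; split; rewrite leUx; apply/andP; split.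
    + by rewrite leUl.
    + apply: le_trans (splitle B) _; rewrite leUx; apply/andP; split.
        by apply: lexUr; mt.
      by apply: lexUl; mt.
    + apply: le_trans (splitle A) _; rewrite leUx; apply/andP; split.
        by apply: lexUl; mt.
      by apply: lexUr; mt.
    + by rewrite leUr.
  have GI := G (enum I); rewrite !big_enum /= in GI.
  apply: (@le_trans _ _ (m I `&` (\meet_(i in I) x i `|` \meet_(i in I) y i))).
    by rewrite leI2 //.
  rewrite meetUr leU2 //; exact: (joins_sup (j := I)).
- move=> x c; apply: le_anti; apply/andP; split.
  + apply/joinsP => I _.
    have -> : \meet_(i in I) vjoin (cvec c) x i = c `|` \meet_(i in I) x i.
      by rewrite joinx_meets.
    rewrite meetUr leU2 ?leIr //; exact: (joins_sup (j := I)).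
  + rewrite leUx; apply/andP; split; last by apply: Smono => i; rewrite leUr.
    apply: (joins_min (j := setT)) => //; rewrite m1 meet1x.
    by apply/meetsP => i _; rewrite leUl.
- move=> x y g; apply: le_anti; apply/andP; split.
    by rewrite lexI !Smono // => i; rewrite /vmeet ?leIl ?leIr.
  rewrite meetx_joins; apply/joinsP => J _.
  rewrite meetC meetx_joins; apply/joinsP => I _.
  set XI := \meet_(i in I) x i; set YJ := \meet_(j in J) y j.
  set XJ := \meet_(j in J) x j; set YI := \meet_(i in I) y i.
  have K : XI `&` YJ <= YI `|` XJ.
    rewrite /YI meets_joinx; apply/meetsP => i Ii.
    rewrite /XJ joinx_meets; apply/meetsP => j Jj.
    have h := Hc _ _ g i j; rewrite joinC in h; apply: le_trans h.
    rewrite leI2 //; [exact: meets_inf | exact: meets_inf].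
  set t := (m J `&` YJ) `&` (m I `&` XI).
  have tK : t <= YI `|` XJ.
    by apply: le_trans K; mt.
  apply: le_trans (splitle tK) _; rewrite leUx; apply/andP; split.
  + apply: (joins_min (j := I)) => //; rewrite /t.
    rewrite lexI; apply/andP; split; first by mt.
    apply/meetsP => i Ii; rewrite /vmeet.
    apply: (@le_trans _ _ (XI `&` YI)); first by mt.
    by rewrite leI2 //; exact: meets_inf.
  + apply: (joins_min (j := J)) => //; rewrite /t.
    rewrite lexI; apply/andP; split; first by mt.
    apply/meetsP => j Jj; rewrite /vmeet.
    apply: (@le_trans _ _ (XJ `&` YJ)); first by mt.
    by rewrite leI2 //; exact: meets_inf.
Qed.
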